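(* Let $N_{\mathbf u}, N_{\boldsymbol\mu}, N_t, s$ be positive integers. Let $\mathbb M\in\mathbb R^{N_{\mathbf u}\times N_{\mathbf u}}$ be a fixed mass matrix and $\mathbf r:\mathbb R^{N_{\mathbf u}}\times\mathbb R^{N_{\boldsymbol\mu}}\times\mathbb R\to\mathbb R^{N_{\mathbf u}}$ continuously differentiable. Let $(a_{ij})_{1\le i,j\le s}$, $(b_i)$, $(c_i)$ be the coefficients of an $s$-stage diagonally implicit Runge–Kutta (DIRK) scheme ($a_{ij}=0$ for $j>i$), let $\Delta t_1,\dots,\Delta t_{N_t}>0$, $t_0=0$, $t_n=t_{n-1}+\Delta t_n$. Fix $\boldsymbol\mu$ and let $\mathbf u^{(0)},\dots,\mathbf u^{(N_t)}$, $\mathbf k_i^{(n)}$ ($n=1,\dots,N_t$, $i=1,\dots,s$) be a time-periodic solution of the fully discrete equations $$\mathbf u^{(n)}=\mathbf u^{(n-1)}+\sum_{i=1}^s b_i\mathbf k_i^{(n)},\qquad \mathbb M\mathbf k_i^{(n)}=\Delta t_n\,\mathbf r\big(\mathbf u_i^{(n)},\boldsymbol\mu,t_{n-1}+c_i\Delta t_n\big),\qquad \mathbf u_i^{(n)}=\mathbf u^{(n-1)}+\sum_{j=1}^i a_{ij}\mathbf k_j^{(n)},$$ with $\mathbf u^{(0)}=\mathbf u^{(N_t)}$. Let $F$ be a continuously differentiable function of $(\mathbf u^{(0)},\dots,\mathbf u^{(N_t)},\mathbf k_1^{(1)},\dots,\mathbf k_s^{(N_t)},\boldsymbol\mu)$.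 Assume the Jacobian $\frac{\partial\mathbf u^{(N_t)}}{\partial\mathbf u_0}(\mathbf u^{(0)};\boldsymbol\mu)-\mathbf I$ of the time-periodicity residual is non-singular at this periodic solution. Then the linear system (a two-point boundary value problem) for the unknowns $\boldsymbol\lambda^{(0)},\dots,\boldsymbol\lambda^{(N_t)},\boldsymbol\kappa_1^{(1)},\dots,\boldsymbol\kappa_s^{(N_t)}\in\mathbb R^{N_{\mathbf u}}$, $$\boldsymbol\lambda^{(N_t)}=\boldsymbol\lambda^{(0)}+\frac{\partial F}{\partial\mathbf u^{(N_t)}}^T,$$ $$\boldsymbol\lambda^{(n-1)}=\boldsymbol\lambda^{(n)}+\frac{\partial F}{\partial\mathbf u^{(n-1)}}^T+\sum_{i=1}^s\Delta t_n\frac{\partial\mathbf r}{\partial\mathbf u}\big(\mathbf u_i^{(n)},\boldsymbol\mu,t_{n-1}+c_i\Delta t_n\big)^T\boldsymbol\kappa_i^{(n)},$$ $$\mathbb M^T\boldsymbol\kappa_i^{(n)}=\frac{\partial F}{\partial\mathbf k_i^{(n)}}^T+b_i\boldsymbol\lambda^{(n)}+\sum_{j=i}^s a_{ji}\Delta t_n\frac{\partial\mathbf r}{\partial\mathbf u}\big(\mathbf u_j^{(n)},\boldsymbol\mu,t_{n-1}+c_j\Delta t_n\big)^T\boldsymbol\kappa_j^{(n)},$$ for $n=1,\dots,N_t$, $i=1,\dots,s$ (all derivatives of $F$ evaluated at the periodic solution), has a solution, and this solution is unique.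
   Context: For $\mathbf u_0\in\mathbb R^{N_{\mathbf u}}$, $\mathbf u^{(N_t)}(\mathbf u_0;\boldsymbol\mu)$ denotes the state at step $N_t$ obtained by evolving the DIRK recursion above from the initial condition $\mathbf u^{(0)}=\mathbf u_0$ (without imposing periodicity), and $\frac{\partial\mathbf u^{(N_t)}}{\partial\mathbf u_0}$ is its Jacobian with respect to $\mathbf u_0$. It is assumed throughout that the DIRK stage equations and their linearizations are uniquely solvable along the periodic solution, i.e. the matrices $\mathbb M-a_{ii}\Delta t_n\frac{\partial\mathbf r}{\partial\mathbf u}(\mathbf u_i^{(n)},\boldsymbol\mu,t_{n-1}+c_i\Delta t_n)$ are non-singular for all $n,i$, so that the map $\mathbf u_0\mapsto\mathbf u^{(N_t)}(\mathbf u_0;\boldsymbol\mu)$ is differentiable near $\mathbf u^{(0)}$. *)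

(* Defs.v *)
From HB Require Import structures.
From mathcomp Require Import all_boot all_order all_algebra.
From mathcomp Require Import all_classical all_reals all_analysis.
Set Implicit Arguments. Unset Strict Implicit. Unset Printing Implicit Defensive.
Import Order.TTheory GRing.Theory Num.Theory.
Import numFieldNormedType.Exports.
Local Open Scope ring_scope.

Section Defs.
Variable R : realType.

Definition jac n m (f : 'cV[R]_n -> 'cV[R]_m) (x : 'cV[R]_n) : 'M[R]_(m, n) :=
  \matrix_(i, j) ('d f x (delta_mx j ord0)) i ord0.

Definition grad n (g : 'cV[R]_n -> R) (x : 'cV[R]_n) : 'cV[R]_n :=
  \col_j ('d g x (delta_mx j ord0)).

(* continuously differentiable: differentiable everywhere, with continuous
   directional derivatives x |-> Df(x) v for every v (finite dimensions) *)
Definition C1 (V W : normedModType R) (f : V -> W) : Prop :=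
  (forall x, differentiable f x) /\ (forall v, continuous (fun x => 'd f x v)).

Definition tgrid (dt : nat -> R) (n : nat) : R := \sum_(1 <= m < n.+1) dt m.

Definition stage Nu (a : nat -> nat -> R) (u : nat -> 'cV[R]_Nu)
  (k : nat -> nat -> 'cV[R]_Nu) (n i : nat) : 'cV[R]_Nu :=
  u n.-1 + \sum_(1 <= j < i.+1) a i j *: k n j.

Definition stime (c : nat -> R) (dt : nat -> R) (n i : nat) : R :=
  tgrid dt n.-1 + c i * dt n.

Definition dirk_sys Nu Nmu (Nt s : nat) (M : 'M[R]_Nu)
  (r : 'cV[R]_Nu -> 'cV[R]_Nmu -> R -> 'cV[R]_Nu)
  (a : nat -> nat -> R) (b c dt : nat -> R) (mu : 'cV[R]_Nmu)
  (u : nat -> 'cV[R]_Nu) (k : nat -> nat -> 'cV[R]_Nu) : Prop :=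
  (forall n, (1 <= n <= Nt)%N ->
     u n = u n.-1 + \sum_(1 <= i < s.+1) b i *: k n i) /\
  (forall n i, (1 <= n <= Nt)%N -> (1 <= i <= s)%N ->
     M *m k n i = dt n *: r (stage a u k n i) mu (stime c dt n i)).

Fixpoint dstate Nu (s : nat) (b : nat -> R) (u0 : 'cV[R]_Nu)
  (k : nat -> nat -> 'cV[R]_Nu) (n : nat) : 'cV[R]_Nu :=
  match n with
  | O => u0
  | m.+1 => dstate s b u0 k m + \sum_(1 <= i < s.+1) b i *: k m.+1 i
  end.

Definition packU Nu Nt (u : nat -> 'cV[R]_Nu) : 'M[R]_(Nu, Nt.+1) :=
  \matrix_(p, q) u (nat_of_ord q) p ord0.

(* packing of k_i^(n) (n = 1..Nt, i = 1..s) as the columns of a matrix,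
   k_i^(n) being column (n-1)*s + (i-1) *)
Definition packK Nu Nt s (k : nat -> nat -> 'cV[R]_Nu) : 'M[R]_(Nu, Nt * s) :=
  \matrix_(p, q) k ((q %/ s).+1)%N ((q %% s).+1)%N p ord0.

Definition upd Nu (u : nat -> 'cV[R]_Nu) (m : nat) (x : 'cV[R]_Nu) :=
  fun p => if p == m then x else u p.
Definition upd2 Nu (k : nat -> nat -> 'cV[R]_Nu) (n i : nat) (x : 'cV[R]_Nu) :=
  fun p q => if (p == n) && (q == i) then x else k p q.

End Defs.

(* Main.v *)
Require Import Defs.
From HB Require Import structures.
From mathcomp Require Import all_boot all_order all_algebra.
From mathcomp Require Import all_classical all_reals all_analysis.
Import Order.TTheory GRing.Theory Num.Theory.
Import numFieldNormedType.Exports.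
Local Open Scope ring_scope.
From mathcomp Require Import zify.
Set Implicit Arguments. Unset Strict Implicit.
Section Calc.
Variable R : realType.

Lemma jac_mul n m (f : 'cV[R]_n -> 'cV[R]_m) x v :
  jac f x *m v = 'd f x v.
Proof.
rewrite {2}(matrix_sum_delta v) linear_sum /=.
apply/matrixP => i j; rewrite !ord1 !mxE summxE.
apply: eq_bigr => l _; rewrite big_ord1 linearZ /= !mxE mulrC.
by [].
Qed.

Lemma mulmx_continuous p n (A : 'M[R]_(p, n)) :
  continuous (fun x : 'cV[R]_n => A *m x).
Proof.
have -> : (fun x : 'cV[R]_n => A *m x) =
   (fun x => \sum_(j < n) x j ord0 *: col j A).
  apply/funext => x; apply/matrixP => i l; rewrite ord1 !mxE summxE.
  by apply: eq_bigr => j _; rewrite !mxE mulrC.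
elim: (index_enum _) => [|j r IH] x.
  under eq_fun do rewrite big_nil.
  exact: cst_continuous.
under eq_fun do rewrite big_cons.
apply: (@continuousD _ _ _ (fun y => _) (fun y => _)); last exact: IH.
apply: continuousZr_tmp; exact: coord_continuous.
Qed.

Section Gen.
Variables (V W : normedModType R).

Lemma dsum (I : eqType) (r : seq I) (P : pred I) (F : I -> V -> W) x :
  (forall i, i \in r -> P i -> differentiable (F i) x) ->
  differentiable (fun y => \sum_(i <- r | P i) F i y) x /\
  forall v, 'd (fun y => \sum_(i <- r | P i) F i y) x v
            = \sum_(i <- r | P i) 'd (F i) x v.
Proof.
elim: r => [|j r IH] HF.
  have -> : (fun y => \sum_(i <- [::] | P i) F i y) = cst 0.
    by apply/funext => y; rewrite big_nil.
  by split; [exact: differentiable_cst | move=> v; rewrite diff_cst big_nil].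
have [IHd IHv] : differentiable (fun y => \sum_(i <- r | P i) F i y) x /\
  forall v, 'd (fun y => \sum_(i <- r | P i) F i y) x v
            = \sum_(i <- r | P i) 'd (F i) x v.
  by apply: IH => i ir; apply: HF; rewrite in_cons ir orbT.
have -> : (fun y => \sum_(i <- j :: r | P i) F i y) =
   (fun y => (if P j then F j y else 0) + \sum_(i <- r | P i) F i y).
  by apply/funext => y; rewrite big_cons; case: (P j); rewrite ?add0r.
case Pj: (P j).
  have dF := HF j (mem_head _ _) Pj.
  split; first exact: (@differentiableD _ _ _ (F j) (fun y => _)).
  by move=> v; rewrite (@diffD _ _ _ (F j) (fun y => _)) //= IHv big_cons Pj.
have -> : (fun y => (if false then F j y else 0) + \sum_(i <- r | P i) F i y)
  = (fun y => \sum_(i <- r | P i) F i y).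
  by apply/funext => y; rewrite add0r.
by split => // v; rewrite IHv big_cons Pj.
Qed.

Lemma dadd2 (f g : V -> W) x : differentiable f x -> differentiable g x ->
  differentiable (fun y => f y + g y) x /\
  forall v, 'd (fun y => f y + g y) x v = 'd f x v + 'd g x v.
Proof.
move=> df dg; split; first exact: (@differentiableD _ _ _ f g).
by move=> v; rewrite (@diffD _ _ _ f g).
Qed.

Lemma dscal (f : V -> W) (c : R) x : differentiable f x ->
  differentiable (fun y => c *: f y) x /\
  forall v, 'd (fun y => c *: f y) x v = c *: 'd f x v.
Proof.
move=> df; split; first exact: (@differentiableZ _ _ _ f c).
by move=> v; rewrite (@diffZ _ _ _ f c).
Qed.

Lemma did x : differentiable (fun y : V => y) x /\ forall v, 'd (fun y : V => y) x v = v.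
Proof.
have h := is_diff_id x.
split; first exact: (@ex_diff _ _ _ _ _ _ _ h).
by move=> v; rewrite (@diff_val _ _ _ _ _ _ _ h).
Qed.

Lemma dnear (f g : V -> W) x : (\near x, f x = g x) ->
  differentiable f x -> differentiable g x ->
  forall v, 'd f x v = 'd g x v.
Proof.
by move=> fg df dg v; rewrite -!deriveE //; apply: near_eq_derive.
Qed.
End Gen.

Lemma dmulmx (V : normedModType R) p n (A : 'M[R]_(p, n)) (f : V -> 'cV[R]_n) x :
  differentiable f x ->
  differentiable (fun y => A *m f y) x /\
  forall v, 'd (fun y => A *m f y) x v = A *m 'd f x v.
Proof.
move=> df.
have cA := @mulmx_continuous p n A.
have dA : forall z, differentiable (@mulmx R p n 1 A) z.
  by move=> z; apply: linear_differentiable.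
have -> : (fun y => A *m f y) = (@mulmx R p n 1 A) \o f by [].
split; first exact: differentiable_comp.
by move=> v; rewrite diff_comp //= diff_lin.
Qed.


Lemma dpart (Nu Nmu : nat) (r : 'cV[R]_Nu -> 'cV[R]_Nmu -> R -> 'cV[R]_Nu) mu t v :
  C1 (fun p : 'cV[R]_Nu * 'cV[R]_Nmu * R => r p.1.1 p.1.2 p.2) ->
  differentiable (fun w => r w mu t) v.
Proof.
move=> [Hd _].
have -> : (fun w => r w mu t) =
  (fun p : 'cV[R]_Nu * 'cV[R]_Nmu * R => r p.1.1 p.1.2 p.2) \o
  (fun w => ((w, mu), t)) by [].
apply: differentiable_comp; last exact: Hd.
apply: (@differentiable_pair _ _ _ _ (fun w => (w, mu)) (fun _ => t));
  try exact: differentiable_cst.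
apply: (@differentiable_pair _ _ _ _ (fun w => w) (fun _ => mu));
  try exact: differentiable_cst.
exact: (did v).1.
Qed.
End Calc.

Section Alg.
Variable R : realType.

Lemma tri_exchange (s : nat) (G : nat -> nat -> R) :
  \sum_(1 <= i < s.+1) \sum_(1 <= j < i.+1) G i j =
  \sum_(1 <= j < s.+1) \sum_(j <= i < s.+1) G i j.
Proof.
transitivity (\sum_(1 <= i < s.+1) \sum_(1 <= j < s.+1)
                 (if (j <= i)%N then G i j else 0)).
  apply: eq_big_nat => i /andP[_ Hi].
  rewrite (@big_nat_widen _ _ _ 1 i.+1 s.+1 xpredT) //.
  by rewrite big_mkcond /=.
rewrite exchange_big_nat /=.
apply: eq_big_nat => j /andP[Hj _].
rewrite (@big_nat_widenl _ _ _ j 1 s.+1 xpredT) // big_mkcond /=.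
by [].
Qed.

Definition dot n (x y : 'cV[R]_n) : R := (x^T *m y) ord0 ord0.

Lemma dotDl n (x y z : 'cV[R]_n) : dot (x + y) z = dot x z + dot y z.
Proof. by rewrite /dot linearD /= mulmxDl mxE. Qed.
Lemma dotDr n (x y z : 'cV[R]_n) : dot x (y + z) = dot x y + dot x z.
Proof. by rewrite /dot mulmxDr mxE. Qed.
Lemma dotZl n c (x y : 'cV[R]_n) : dot (c *: x) y = c * dot x y.
Proof. by rewrite /dot linearZ /= -scalemxAl mxE. Qed.
Lemma dotZr n c (x y : 'cV[R]_n) : dot x (c *: y) = c * dot x y.
Proof. by rewrite /dot -scalemxAr mxE. Qed.
Lemma dotNl n (x y : 'cV[R]_n) : dot (- x) y = - dot x y.
Proof. by rewrite -scaleN1r dotZl mulN1r. Qed.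
Lemma dotBl n (x y z : 'cV[R]_n) : dot (x - y) z = dot x z - dot y z.
Proof. by rewrite dotDl dotNl. Qed.
Lemma dotMl n (A : 'M[R]_n) (x y : 'cV[R]_n) : dot (A *m x) y = dot x (A^T *m y).
Proof. by rewrite /dot trmx_mul mulmxA. Qed.
Lemma dot_sumr n (I : Type) (r : seq I) (P : pred I) (x : 'cV[R]_n) F :
  dot x (\sum_(i <- r | P i) F i) = \sum_(i <- r | P i) dot x (F i).
Proof.
elim/big_rec2: _ => [|i y1 y2 _ <-]; first by rewrite /dot mulmx0 mxE.
by rewrite dotDr.
Qed.
Lemma dot_suml n (I : Type) (r : seq I) (P : pred I) (y : 'cV[R]_n) F :
  dot (\sum_(i <- r | P i) F i) y = \sum_(i <- r | P i) dot (F i) y.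
Proof.
elim/big_rec2: _ => [|i y1 y2 _ <-]; first by rewrite /dot linear0 mul0mx mxE.
by rewrite dotDl.
Qed.
Lemma dot_delta n (x : 'cV[R]_n) i : dot x (delta_mx i ord0) = x i ord0.
Proof.
rewrite /dot mxE (bigD1 i) //= big1 ?addr0.
  by rewrite !mxE !eqxx mulr1.
by move=> j /negbTE Hj; rewrite !mxE Hj mulr0.
Qed.
Lemma dot_ext n (x y : 'cV[R]_n) : (forall e, dot x e = dot y e) -> x = y.
Proof.
move=> H; apply/matrixP => i j; rewrite ord1 -!dot_delta; exact: H.
Qed.

Section Step.
Variables (n s : nat) (M : 'M[R]_n) (J : nat -> 'M[R]_n) (a : nat -> nat -> R)
  (b : nat -> R) (h : R) (d : 'cV[R]_n) (dk : nat -> 'cV[R]_n)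
  (lam : 'cV[R]_n) (kap : nat -> 'cV[R]_n).
Hypothesis Hf : forall i, (1 <= i <= s)%N ->
  M *m dk i = h *: (J i *m (d + \sum_(1 <= j < i.+1) a i j *: dk j)).
Hypothesis Ha : forall i, (1 <= i <= s)%N ->
  M^T *m kap i = b i *: lam + \sum_(i <= j < s.+1) (a j i * h) *: ((J j)^T *m kap j).

Lemma step_identity :
  dot (lam + \sum_(1 <= i < s.+1) h *: ((J i)^T *m kap i)) d =
  dot lam (d + \sum_(1 <= i < s.+1) b i *: dk i).
Proof.
rewrite dotDl dotDr dot_suml dot_sumr; congr (_ + _).
have E : forall i, (1 <= i <= s)%N -> dot lam (b i *: dk i) =
   h * dot (kap i) (J i *m d)
   + \sum_(1 <= j < i.+1) h * a i j * dot (kap i) (J i *m dk j)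
   - \sum_(i <= j < s.+1) a j i * h * dot (kap j) (J j *m dk i).
  move=> i Hi.
  have -> : dot lam (b i *: dk i) = dot (b i *: lam) (dk i).
    by rewrite dotZr dotZl.
  have -> : b i *: lam = M^T *m kap i
        - \sum_(i <= j < s.+1) (a j i * h) *: ((J j)^T *m kap j).
    by rewrite Ha // addrK.
  rewrite dotBl dotMl trmxK Hf // dotZr mulmxDr dotDr mulrDr mulmx_sumr dot_sumr.
  rewrite mulr_sumr dot_suml; congr (_ + _ - _).
    apply: eq_bigr => j _; rewrite -scalemxAr dotZr mulrA //.
  apply: eq_bigr => j _; rewrite dotZl dotMl trmxK //.
rewrite [RHS](eq_big_nat _ _ (fun i (Hi : (1 <= i < s.+1)%N) => E i Hi)).
rewrite big_split /= big_split /= sumrN -addrA -[LHS]addr0; congr (_ + _).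
  by apply: eq_bigr => i _; rewrite dotZl dotMl trmxK.
apply/eqP; rewrite eq_sym subr_eq0; apply/eqP.
rewrite tri_exchange; apply: eq_bigr => j _; apply: eq_bigr => i _.
by rewrite [h * _]mulrC.
Qed.
End Step.
End Alg.

Section Main.
Variables (R : realType) (Nu Nmu Nt s : nat)
  (M : 'M[R]_Nu) (r : 'cV[R]_Nu -> 'cV[R]_Nmu -> R -> 'cV[R]_Nu)
  (a : nat -> nat -> R) (b c dt : nat -> R)
  (mu : 'cV[R]_Nmu) (u : nat -> 'cV[R]_Nu) (k : nat -> nat -> 'cV[R]_Nu)
  (Kb : nat -> nat -> 'cV[R]_Nu -> 'cV[R]_Nu).
Hypothesis Hr : C1 (fun p : 'cV[R]_Nu * 'cV[R]_Nmu * R => r p.1.1 p.1.2 p.2).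
Hypothesis Hdirk : dirk_sys Nt s M r a b c dt mu u k.
Hypothesis HKb : forall n i, (1 <= n <= Nt)%N -> (1 <= i <= s)%N ->
        Kb n i (u 0%N) = k n i /\ differentiable (Kb n i) (u 0%N).
Hypothesis Hnear : \forall u0 \near u 0%N,
        dirk_sys Nt s M r a b c dt mu
          (dstate s b u0 (fun n i => Kb n i u0)) (fun n i => Kb n i u0).

Definition Jr n i := jac (fun v => r v mu (stime c dt n i)) (stage a u k n i).
Definition Df n := fun x => dstate s b x (fun n i => Kb n i x) n.
Local Notation u0 := (u 0%N).

Lemma FD n : (n <= Nt)%N -> differentiable (Df n) u0 /\ Df n u0 = u n /\
  forall e, 'd (Df n) u0 e =
     if n is m.+1 then 'd (Df m) u0 e + \sum_(1 <= i < s.+1) b i *: 'd (Kb n i) u0 e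
     else e.
Proof.
elim: n => [_|n IH Hn].
  have E : Df 0 = (fun x => x) by [].
  by rewrite E; have [d1 d2] := did u0; split => //.
have [d1 [v1 _]] := IH (ltnW Hn).
have Hn1 : (1 <= n.+1 <= Nt)%N by rewrite Hn.
have E : Df n.+1 = (fun x => Df n x + \sum_(i <- index_iota 1 s.+1) b i *: Kb n.+1 i x).
  by [].
have Hs : differentiable (fun x => \sum_(i <- index_iota 1 s.+1) b i *: Kb n.+1 i x) u0
   /\ forall e, 'd (fun x => \sum_(i <- index_iota 1 s.+1) b i *: Kb n.+1 i x) u0 e =
      \sum_(i <- index_iota 1 s.+1) 'd (fun x => b i *: Kb n.+1 i x) u0 e.
  apply: (dsum (P := xpredT)) => i; rewrite mem_index_iota ltnS => Hi _.
  exact: (dscal (b i) (HKb Hn1 Hi).2).1.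
have [ds dv] := Hs.
rewrite E; have [da dav] := dadd2 d1 ds.
split; first exact: da.
split.
  rewrite v1 (proj1 Hdirk n.+1 Hn1); congr (_ + _).
  apply: eq_big_nat => i; rewrite ltnS => Hi; rewrite (HKb Hn1 Hi).1.
  reflexivity.
move=> e; apply: (etrans (dav e)).
congr (_ + _); apply: (etrans (dv e)).
apply: eq_big_nat => i; rewrite ltnS => Hi.
exact: (dscal (b i) (HKb Hn1 Hi).2).2.
Qed.

Lemma FS n i : (1 <= n <= Nt)%N -> (1 <= i <= s)%N -> forall e,
  M *m 'd (Kb n i) u0 e = dt n *: (Jr n i *m ('d (Df n.-1) u0 e
     + \sum_(1 <= j < i.+1) a i j *: 'd (Kb n j) u0 e)).
Proof.
move=> Hn Hi e.
pose t := stime c dt n i.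
pose rr := fun w => r w mu t.
pose stg := fun x => Df n.-1 x + \sum_(1 <= j < i.+1) a i j *: Kb n j x.
have Hn1 : (n.-1 <= Nt)%N.
  by apply: leq_trans (leq_pred n) _; case/andP: Hn.
have [dD [vD _]] := FD Hn1.
have Hj : forall j, j \in index_iota 1 i.+1 -> (1 <= j <= s)%N.
  move=> j; rewrite mem_index_iota ltnS => /andP[-> Hj] /=.
  by apply: leq_trans Hj _; case/andP: Hi.
have HKj : forall j, j \in index_iota 1 i.+1 -> xpredT j ->
    differentiable (fun x => a i j *: Kb n j x) u0.
  by move=> j Hj1 _; exact: (dscal (a i j) (HKb Hn (Hj j Hj1)).2).1.
have [dS vS] := dsum HKj.
have [dstg vstg] := dadd2 dD dS.
have Hstg0 : stg u0 = stage a u k n i.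
  rewrite /stg /stage vD; congr (_ + _); apply: eq_big_seq => j Hj1.
  by rewrite (HKb Hn (Hj j Hj1)).1.
have drr : differentiable rr (stg u0) := dpart mu t (stg u0) Hr.
have dc : differentiable (rr \o stg) u0 := differentiable_comp dstg drr.
have [dg vg] := dscal (dt n) dc.
have [df vf] := dmulmx M (HKb Hn Hi).2.
have Hnr : \forall x \near u0, M *m Kb n i x = dt n *: rr (stg x).
  apply: filterS Hnear => x Hx; exact: (proj2 Hx n i Hn Hi).
apply: etrans (esym (vf e)) _.
apply: etrans (dnear (f := fun x => M *m Kb n i x)
   (g := fun x => dt n *: (rr \o stg) x) Hnr df dg e) _.
apply: etrans (vg e) _; congr (dt n *: _).
apply: etrans (f_equal (fun F => F e) (diff_comp dstg drr)) _.
change ('d rr (stg u0) ('d stg u0 e) = Jr n i *m ('d (Df n.-1) u0 e +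
             \sum_(1 <= j < i.+1) a i j *: 'd (Kb n j) u0 e)).
apply: etrans (esym (jac_mul rr (stg u0) _)) _.
have -> : jac rr (stg u0) = Jr n i by rewrite /Jr -Hstg0.
congr (_ *m _).
apply: etrans (vstg e) _; congr (_ + _).
apply: etrans (vS e) _; apply: eq_big_seq => j Hj1.
exact: (dscal (a i j) (HKb Hn (Hj j Hj1)).2).2.
Qed.

Definition E2 (gu : nat -> 'cV[R]_Nu) (lam : nat -> 'cV[R]_Nu)
  (kap : nat -> nat -> 'cV[R]_Nu) :=
  forall n, (1 <= n <= Nt)%N ->
    lam n.-1 = lam n + gu n.-1 + \sum_(1 <= i < s.+1) dt n *: ((Jr n i)^T *m kap n i).
Definition E3 (gk : nat -> nat -> 'cV[R]_Nu) (lam : nat -> 'cV[R]_Nu)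
  (kap : nat -> nat -> 'cV[R]_Nu) :=
  forall n i, (1 <= n <= Nt)%N -> (1 <= i <= s)%N ->
    M^T *m kap n i = gk n i + b i *: lam n
      + \sum_(i <= j < s.+1) (a j i * dt n) *: ((Jr n j)^T *m kap n j).

Lemma HomId l kp : E2 (fun _ => 0) l kp -> E3 (fun _ _ => 0) l kp ->
  forall n, (n <= Nt)%N -> forall e, dot (l 0%N) e = dot (l n) ('d (Df n) u0 e).
Proof.
move=> H2 H3; elim=> [Hn e|n IH Hn e].
  by rewrite (proj2 (proj2 (FD Hn)) e).
have Hn1 : (1 <= n.+1 <= Nt)%N by rewrite Hn.
rewrite (IH (ltnW Hn) e) (H2 n.+1 Hn1) addr0.
have Hf : forall i, (1 <= i <= s)%N ->
    M *m 'd (Kb n.+1 i) u0 e = dt n.+1 *: (Jr n.+1 i *m ('d (Df n) u0 e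
     + \sum_(1 <= j < i.+1) a i j *: 'd (Kb n.+1 j) u0 e)).
  by move=> i Hi; exact: (FS Hn1 Hi e).
have Ha : forall i, (1 <= i <= s)%N ->
    M^T *m kp n.+1 i = b i *: l n.+1 + \sum_(i <= j < s.+1)
       (a j i * dt n.+1) *: ((Jr n.+1 j)^T *m kp n.+1 j).
  by move=> i Hi; rewrite (H3 n.+1 i Hn1 Hi) add0r.
apply: etrans (step_identity Hf Ha) _; congr (dot _ _).
exact: (esym (proj2 (proj2 (FD Hn)) e)).
Qed.

Lemma Hom_lam0 l kp : E2 (fun _ => 0) l kp -> E3 (fun _ _ => 0) l kp ->
  l 0%N = (jac (Df Nt) u0)^T *m l Nt.
Proof.
move=> H2 H3; apply: dot_ext => e.
by rewrite (HomId H2 H3 (leqnn Nt) e) dotMl trmxK jac_mul.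
Qed.

Hypothesis Hst : forall n i, (1 <= n <= Nt)%N -> (1 <= i <= s)%N ->
  M - (a i i * dt n) *: Jr n i \in unitmx.
Hypothesis HP : jac (Df Nt) u0 - 1%:M \in unitmx.

Lemma trAst n i : (M - (a i i * dt n) *: Jr n i)^T
   = M^T - (a i i * dt n) *: (Jr n i)^T.
Proof. by rewrite linearB /= linearZ. Qed.

Lemma StageZero l kp n : E3 (fun _ _ => 0) l kp -> (1 <= n <= Nt)%N -> l n = 0 ->
  forall i, (1 <= i <= s)%N -> kp n i = 0.
Proof.
move=> H3 Hn Hl.
suff H : forall m i, (s - m < i)%N -> (i <= s)%N -> kp n i = 0.
  move=> i /andP[Hi1 Hi2]; apply: (H s) => //; by rewrite subnn.
elim=> [i Hi1 Hi2|m IH i Hi1 Hi2].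
  by move: (leq_trans Hi1 Hi2); rewrite subn0 ltnn.
have [Hlt|Hge] := ltnP (s - m)%N i; first exact: IH.
have Hi : i = (s - m)%N.
  apply/eqP; rewrite eqn_leq Hge /=.
  lia.
have Hi0 : (1 <= i <= s)%N by lia.
have E := H3 n i Hn Hi0.
rewrite Hl scaler0 add0r big_ltn ?ltnS // in E.
rewrite big_nat big1 ?addr0 in E; last first.
  move=> j /andP[Hj1 Hj2]; rewrite (IH j) ?mulmx0 ?scaler0 //.
  move: Hi Hj1; clear; lia.
have E2 : (M - (a i i * dt n) *: Jr n i)^T *m kp n i = 0.
  by rewrite trAst mulmxBl E -scalemxAl add0r subrr.
have U : (M - (a i i * dt n) *: Jr n i)^T \in unitmx by rewrite unitmx_tr Hst.
by rewrite -(mulKmx U (kp n i)) E2 mulmx0.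
Qed.

Lemma ZeroAll l kp : E2 (fun _ => 0) l kp -> E3 (fun _ _ => 0) l kp ->
  l Nt = l 0%N ->
  (forall n, (n <= Nt)%N -> l n = 0) /\
  (forall n i, (1 <= n <= Nt)%N -> (1 <= i <= s)%N -> kp n i = 0).
Proof.
move=> H2 H3 Hper.
have L0 := Hom_lam0 H2 H3.
have HNt : l Nt = 0.
  have E : (jac (Df Nt) u0 - 1%:M)^T *m l Nt = 0.
    by rewrite linearB /= trmx1 mulmxBl mul1mx -L0 Hper subrr.
  have U : (jac (Df Nt) u0 - 1%:M)^T \in unitmx by rewrite unitmx_tr.
  by rewrite -(mulKmx U (l Nt)) E mulmx0.
have Hd : forall m, (m <= Nt)%N -> l (Nt - m)%N = 0.
  elim=> [_|m IH Hm]; first by rewrite subn0.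
  have Hn : (1 <= Nt - m <= Nt)%N by lia.
  have Hl := IH (ltnW Hm).
  have K := StageZero H3 Hn Hl.
  have -> : (Nt - m.+1)%N = (Nt - m).-1 by lia.
  rewrite (H2 _ Hn) Hl addr0 add0r big_nat big1 // => i Hi.
  by rewrite K ?mulmx0 ?scaler0 //; rewrite -ltnS.
split.
  by move=> n Hn; have := Hd (Nt - n)%N (leq_subr _ _); rewrite subKn.
move=> n i Hn Hi; apply: (StageZero H3 Hn) => //.
have := Hd (Nt - n)%N (leq_subr _ _); rewrite subKn //; by case/andP: Hn.
Qed.

Lemma hAC1 (V : zmodType) (A B g S1 S2 : V) :
  (A + g + S1) - (B + g + S2) = (A - B) + (S1 - S2).
Proof. by rewrite [- (B + g + S2)]opprD addrACA [- (B + g)]opprD [A + g + _]addrACA subrr addr0. Qed.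
Lemma hAC2 (V : zmodType) (A B g S1 S2 : V) :
  (g + A + S1) - (g + B + S2) = (A - B) + (S1 - S2).
Proof. by rewrite [- (g + B + S2)]opprD addrACA [- (g + B)]opprD [g + A + _]addrACA subrr add0r. Qed.

Lemma E2_diff gu l1 k1 l2 k2 : E2 gu l1 k1 -> E2 gu l2 k2 ->
  E2 (fun _ => 0) (fun n => l1 n - l2 n) (fun n i => k1 n i - k2 n i).
Proof.
move=> H1 H2 n Hn; rewrite (H1 n Hn) (H2 n Hn) addr0 hAC1 -sumrB.
by congr (_ + _); apply: eq_bigr => i _; rewrite mulmxBr scalerBr.
Qed.

Lemma E3_diff gk l1 k1 l2 k2 : E3 gk l1 k1 -> E3 gk l2 k2 ->
  E3 (fun _ _ => 0) (fun n => l1 n - l2 n) (fun n i => k1 n i - k2 n i).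
Proof.
move=> H1 H2 n i Hn Hi; rewrite mulmxBr (H1 n i Hn Hi) (H2 n i Hn Hi) add0r hAC2.
rewrite -sumrB scalerBr; congr (_ + _); apply: eq_bigr => j _.
by rewrite mulmxBr scalerBr.
Qed.

Definition Ast n i := M - (a i i * dt n) *: Jr n i.

Fixpoint kapS (gk : nat -> nat -> 'cV[R]_Nu) (n : nat) (l : 'cV[R]_Nu) (m : nat)
  : nat -> 'cV[R]_Nu :=
  match m with
  | 0 => fun _ => 0
  | m'.+1 => fun j => if j == (s - m')%N then
      invmx (Ast n j)^T *m (gk n j + b j *: l + \sum_(j.+1 <= j' < s.+1)
          (a j' j * dt n) *: ((Jr n j')^T *m kapS gk n l m' j'))
      else kapS gk n l m' j
  end.

Lemma kapS_stable gk n l m m2 j : (m <= m2)%N -> (s - m < j)%N ->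
  kapS gk n l m2 j = kapS gk n l m j.
Proof.
elim: m2 => [|m2 IH] Hm Hj.
  by move: Hm; rewrite leqn0 => /eqP->.
move: Hm; rewrite leq_eqVlt => /orP[/eqP->|Hm] //.
have Hne : (j == (s - m2)%N) = false by apply/negbTE; lia.
by rewrite [kapS _ _ _ m2.+1 _]/= Hne; apply: IH.
Qed.

Lemma kapS_eq gk n l i : (1 <= n <= Nt)%N -> (1 <= i <= s)%N ->
  M^T *m kapS gk n l s i = gk n i + b i *: l
    + \sum_(i <= j < s.+1) (a j i * dt n) *: ((Jr n j)^T *m kapS gk n l s j).
Proof.
move=> Hn Hi.
have Hs1 : kapS gk n l s i = kapS gk n l (s - i).+1 i.
  apply: kapS_stable; lia.
have Hsum : \sum_(i.+1 <= j < s.+1) (a j i * dt n) *: ((Jr n j)^T *m kapS gk n l (s - i) j)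
   = \sum_(i.+1 <= j < s.+1) (a j i * dt n) *: ((Jr n j)^T *m kapS gk n l s j).
  apply: eq_big_nat => j Hj; rewrite (@kapS_stable gk n l (s - i) s j) //; lia.
have Hii : (i == (s - (s - i))%N) = true by apply/eqP; lia.
have Hdef : kapS gk n l s i = invmx (Ast n i)^T *m (gk n i + b i *: l
    + \sum_(i.+1 <= j < s.+1) (a j i * dt n) *: ((Jr n j)^T *m kapS gk n l s j)).
  by rewrite Hs1 [kapS _ _ _ (s - i).+1 _]/= Hii Hsum.
have U : (Ast n i)^T \in unitmx by rewrite unitmx_tr; exact: Hst.
have HK : (Ast n i)^T *m kapS gk n l s i = gk n i + b i *: l
    + \sum_(i.+1 <= j < s.+1) (a j i * dt n) *: ((Jr n j)^T *m kapS gk n l s j).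
  by rewrite {1}Hdef mulKVmx.
have EM : M^T = (Ast n i)^T + (a i i * dt n) *: (Jr n i)^T.
  by rewrite /Ast trAst subrK.
have Hlt : (i < s.+1)%N by lia.
rewrite EM mulmxDl HK -scalemxAl (big_ltn Hlt).
by rewrite [_ *: _ + \sum_(_ <= _ < _) _]addrC addrA.
Qed.

Fixpoint lamD (gu : nat -> 'cV[R]_Nu) (gk : nat -> nat -> 'cV[R]_Nu)
  (x : 'cV[R]_Nu) (m : nat) : 'cV[R]_Nu :=
  match m with
  | 0 => x
  | m'.+1 => lamD gu gk x m' + gu (Nt - m')%N.-1
      + \sum_(1 <= i < s.+1) dt (Nt - m')%N *:
          ((Jr (Nt - m') i)^T *m kapS gk (Nt - m') (lamD gu gk x m') s i)
  end.
Definition lamF gu gk x n := lamD gu gk x (Nt - n).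
Definition kapF gu gk x n i := kapS gk n (lamF gu gk x n) s i.

Lemma lamF_E2 gu gk x : E2 gu (lamF gu gk x) (kapF gu gk x).
Proof.
move=> n Hn.
have e1 : (Nt - n.-1)%N = (Nt - n).+1 by lia.
have e2 : (Nt - (Nt - n))%N = n by lia.
rewrite /lamF e1; simpl lamD; rewrite e2 //.
Qed.

Lemma lamF_E3 gu gk x : E3 gk (lamF gu gk x) (kapF gu gk x).
Proof. by move=> n i Hn Hi; rewrite /kapF kapS_eq. Qed.

Lemma Exists gu gk : exists l kp, E2 gu l kp /\ E3 gk l kp /\ l Nt = l 0%N + gu Nt.
Proof.
pose c0 := lamF gu gk 0 0%N.
pose P := jac (Df Nt) u0.
pose x := invmx ((P - 1%:M)^T) *m (- (c0 + gu Nt)).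
exists (lamF gu gk x), (kapF gu gk x).
split; first exact: lamF_E2.
split; first exact: lamF_E3.
have D2 := E2_diff (lamF_E2 gu gk x) (lamF_E2 gu gk 0).
have D3 := E3_diff (lamF_E3 gu gk x) (lamF_E3 gu gk 0).
have L0 := Hom_lam0 D2 D3.
have HxN : lamF gu gk x Nt = x by rewrite /lamF subnn.
have H0N : lamF gu gk 0 Nt = 0 by rewrite /lamF subnn.
rewrite HxN H0N subr0 in L0.
have U : (P - 1%:M)^T \in unitmx by rewrite unitmx_tr.
have h : (P - 1%:M)^T *m x = - (c0 + gu Nt) by rewrite mulKVmx.
rewrite linearB /= trmx1 mulmxBl mul1mx in h.
have h2 : lamF gu gk x 0%N = P^T *m x + c0.
  by rewrite -L0 subrK.
rewrite HxN h2 -addrA.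
move/eqP: h; rewrite subr_eq => /eqP ->.
by rewrite (addrC (- _)) subrK.
Qed.
End Main.

Unset Implicit Arguments. Set Strict Implicit.

Theorem mainTheorem1 (R : realType) (Nu Nmu Nt s : nat)
  (HNu : (0 < Nu)%N) (HNmu : (0 < Nmu)%N) (HNt : (0 < Nt)%N) (Hs : (0 < s)%N)
  (M : 'M[R]_Nu) (r : 'cV[R]_Nu -> 'cV[R]_Nmu -> R -> 'cV[R]_Nu)
  (a : nat -> nat -> R) (b c dt : nat -> R)
  (mu : 'cV[R]_Nmu) (u : nat -> 'cV[R]_Nu) (k : nat -> nat -> 'cV[R]_Nu)
  (F : 'M[R]_(Nu, Nt.+1) -> 'M[R]_(Nu, Nt * s) -> 'cV[R]_Nmu -> R) :
  (* r continuously differentiable *)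
  C1 (fun p : 'cV[R]_Nu * 'cV[R]_Nmu * R => r p.1.1 p.1.2 p.2) ->
  (* DIRK: a_ij = 0 for j > i *)
  (forall i j, (1 <= i <= s)%N -> (i < j <= s)%N -> a i j = 0) ->
  (* positive time steps *)
  (forall n, (1 <= n <= Nt)%N -> 0 < dt n) ->
  (* time-periodic solution of the fully discrete equations *)
  dirk_sys Nt s M r a b c dt mu u k ->
  u 0%N = u Nt ->
  (* F continuously differentiable *)
  C1 (fun p : 'M[R]_(Nu, Nt.+1) * 'M[R]_(Nu, Nt * s) * 'cV[R]_Nmu =>
        F p.1.1 p.1.2 p.2) ->
  (* standing assumption: the linearized stage matrices are non-singular *)
  (forall n i, (1 <= n <= Nt)%N -> (1 <= i <= s)%N ->
     M - (a i i * dt n) *: jac (fun v => r v mu (stime c dt n i)) (stage a u k n i)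
       \in unitmx) ->
  (* d u^(Nt)/d u_0 - I non-singular, where u_0 |-> u^(Nt)(u_0; mu) is the map
     obtained by evolving the DIRK recursion from u_0, along the local branch
     of stage solutions through the periodic solution *)
  (exists Kb : nat -> nat -> 'cV[R]_Nu -> 'cV[R]_Nu,
     (forall n i, (1 <= n <= Nt)%N -> (1 <= i <= s)%N ->
        Kb n i (u 0%N) = k n i /\ differentiable (Kb n i) (u 0%N)) /\
     (\forall u0 \near u 0%N,
        dirk_sys Nt s M r a b c dt mu
          (dstate s b u0 (fun n i => Kb n i u0)) (fun n i => Kb n i u0)) /\
     jac (fun u0 => dstate s b u0 (fun n i => Kb n i u0) Nt) (u 0%N) - 1%:M
       \in unitmx) ->
  let Jr n i := jac (fun v => r v mu (stime c dt n i)) (stage a u k n i) in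
  let gU m := grad (fun x => F (packU Nt (upd u m x)) (packK Nt s k) mu) (u m) in
  let gK n i :=
    grad (fun x => F (packU Nt u) (packK Nt s (upd2 k n i x)) mu) (k n i) in
  let adj (lam : nat -> 'cV[R]_Nu) (kap : nat -> nat -> 'cV[R]_Nu) :=
    [/\ lam Nt = lam 0%N + gU Nt,
        (forall n, (1 <= n <= Nt)%N ->
           lam n.-1 = lam n + gU n.-1
                      + \sum_(1 <= i < s.+1) dt n *: ((Jr n i)^T *m kap n i)) &
        (forall n i, (1 <= n <= Nt)%N -> (1 <= i <= s)%N ->
           M^T *m kap n i = gK n i + b i *: lam n
             + \sum_(i <= j < s.+1) (a j i * dt n) *: ((Jr n j)^T *m kap n j))] in
  exists lam kap, adj lam kap /\
    forall lam' kap', adj lam' kap' ->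
      (forall n, (n <= Nt)%N -> lam' n = lam n) /\
      (forall n i, (1 <= n <= Nt)%N -> (1 <= i <= s)%N -> kap' n i = kap n i).
Proof.
move=> Hr _ _ Hdirk _ _ Hst [Kb [HKb [Hnear HP]]] Jr gU gK adj.
have [l [kp [H2 [H3 Hp]]]] := Exists Hr Hdirk HKb Hnear Hst HP gU gK.
exists l, kp; split.
  split; [exact: Hp | exact: H2 | exact: H3].
move=> l' kp' [H1' H2' H3'].
have D2 := E2_diff H2' H2.
have D3 := E3_diff H3' H3.
have Dp : l' Nt - l Nt = l' 0%N - l 0%N.
  rewrite H1' Hp.
  by rewrite [- (l 0%N + gU Nt)]opprD addrACA subrr addr0.
have [Z1 Z2] := ZeroAll Hr Hdirk HKb Hnear Hst HP D2 D3 Dp.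
split.
  by move=> n Hn; apply/eqP; rewrite -subr_eq0; apply/eqP; exact: Z1.
by move=> n i Hn Hi; apply/eqP; rewrite -subr_eq0; apply/eqP; exact: Z2.
Qed.
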